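(* Let $g=\frac{\sqrt5-1}2$, $g\le\alpha\le\beta\le1$, $x\in[\alpha-1,\alpha)$, $z\in[\beta-1,\beta)$. (1) If $x=z$ or $(x+1)(1-z)=1$ or $(1-x)(z+1)=1$, then $T_\beta(z)-T_\alpha(x)\in\{0,1\}$. (2) If $x+z=0$ or $(x+1)(z+1)=1$, then $T_\alpha(x)+T_\beta(z)\in\{0,1\}$. (3) If $z-x=1$, then $(x+1)(T_\beta(z)+1)=1$. (4) If $x+z=1$, then $(T_\alpha(x)+1)(1-z)=1$ if $x>\frac1{\alpha+1}$; $(1-x)(T_\beta(z)+1)=1$ if $z>\frac1{\beta+1}$; and $(T_\alpha(x)+1)(T_\beta(z)+1)=1$ otherwise.
   Context: For $\alpha\in[\tfrac12,1]$, $T_\alpha:[\alpha-1,\alpha)\to[\alpha-1,\alpha)$ is $T_\alpha(x)=\frac1x-\lfloor\frac1x+1-\alpha\rfloor$ for $x\ne0$, $T_\alpha(0)=0$. *)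

(* Defs.v *)
From Stdlib Require Import Reals Lra.
Open Scope R_scope.

(* floor of a real number: up r is the unique integer with r < up r <= r + 1 *)
Definition Rfloor (r : R) : Z := (up r - 1)%Z.

Definition T (alpha x : R) : R :=
  if Req_EM_T x 0 then 0 else / x - IZR (Rfloor (/ x + 1 - alpha)).

Definition gold : R := (sqrt 5 - 1) / 2.

(* Main.v *)
Require Import Defs.
From Stdlib Require Import Reals Lra Lia Psatz.
Open Scope R_scope.

Lemma Rfloor_spec r : IZR (Rfloor r) <= r < IZR (Rfloor r) + 1.
Proof. unfold Rfloor. rewrite minus_IZR. destruct (archimed r). simpl. lra. Qed.

Lemma Rfloor_eq r n : IZR n <= r < IZR n + 1 -> Rfloor r = n.
Proof.
  intros [h1 h2]. unfold Rfloor. rewrite <- (tech_up r (n+1)).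
  - lia.
  - rewrite plus_IZR; simpl; lra.
  - rewrite plus_IZR; simpl; lra.
Qed.

Lemma T_nz a x : x <> 0 -> T a x = /x - IZR (Rfloor (/x + 1 - a)).
Proof. intro h. unfold T. destruct (Req_EM_T x 0); [contradiction|reflexivity]. Qed.

Lemma T_0 a : T a 0 = 0.
Proof. unfold T. destruct (Req_EM_T 0 0); [reflexivity|contradiction]. Qed.

Lemma T_range a x : x <> 0 -> a - 1 <= T a x < a.
Proof. intro h. rewrite T_nz by exact h. pose proof (Rfloor_spec (/x + 1 - a)). lra. Qed.

Lemma T_n a x n : x <> 0 -> IZR n <= /x + 1 - a < IZR n + 1 -> T a x = /x - IZR n.
Proof. intros h h2. rewrite T_nz by exact h. rewrite (Rfloor_eq _ _ h2). reflexivity. Qed.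

Lemma int01 m : -1 < IZR m -> IZR m < 2 -> IZR m = 0 \/ IZR m = 1.
Proof.
  intros h1 h2. assert (-1 < m)%Z by (apply lt_IZR; simpl; lra).
  assert (m < 2)%Z by (apply lt_IZR; simpl; lra).
  assert (m = 0 \/ m = 1)%Z as [-> | ->] by lia; [left|right]; reflexivity.
Qed.

Lemma diff01 a b x z k : x <> 0 -> z <> 0 -> /z = /x + IZR k -> 0 <= b - a < 1 ->
  T b z - T a x = 0 \/ T b z - T a x = 1.
Proof.
  intros hx hz e hab. pose proof (T_range a x hx). pose proof (T_range b z hz).
  assert (E : T b z - T a x = IZR (k + Rfloor (/x + 1 - a) - Rfloor (/z + 1 - b))).
  { rewrite (T_nz a x hx), (T_nz b z hz), minus_IZR, plus_IZR. lra. }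
  rewrite E in *. apply int01; lra.
Qed.

Lemma sum01 a b x z k : x <> 0 -> z <> 0 -> /z = - /x + IZR k -> 1 < a + b -> a + b <= 2 ->
  T a x + T b z = 0 \/ T a x + T b z = 1.
Proof.
  intros hx hz e h1 h2. pose proof (T_range a x hx). pose proof (T_range b z hz).
  assert (E : T a x + T b z = IZR (k - Rfloor (/x + 1 - a) - Rfloor (/z + 1 - b))).
  { rewrite (T_nz a x hx), (T_nz b z hz), !minus_IZR. lra. }
  rewrite E in *. apply int01; lra.
Qed.

Lemma le_inv x a : 0 < a -> x <= /a -> x * a <= 1.
Proof. intros h h2. rewrite <- (Rinv_l a) by lra. apply Rmult_le_compat_r; lra. Qed.

Lemma lt_inv x a : 0 < a -> /a < x -> 1 < x * a.
Proof. intros h h2. rewrite <- (Rinv_l a) by lra. apply Rmult_lt_compat_r; lra. Qed.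

Lemma gold_facts : 1/2 < gold < 1 /\ gold * gold + gold = 1.
Proof.
  unfold gold. assert (sqrt 5 * sqrt 5 = 5) by (apply sqrt_sqrt; lra).
  pose proof (sqrt_pos 5). split; [split|]; nra.
Qed.

Theorem lemma4p2 (alpha beta x z : R)
  (hga : gold <= alpha) (hab : alpha <= beta) (hb1 : beta <= 1)
  (hx : alpha - 1 <= x < alpha) (hz : beta - 1 <= z < beta) :
  ((x = z \/ (x + 1) * (1 - z) = 1 \/ (1 - x) * (z + 1) = 1) ->
     (T beta z - T alpha x = 0 \/ T beta z - T alpha x = 1)) /\
  ((x + z = 0 \/ (x + 1) * (z + 1) = 1) ->
     (T alpha x + T beta z = 0 \/ T alpha x + T beta z = 1)) /\
  (z - x = 1 -> (x + 1) * (T beta z + 1) = 1) /\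
  (x + z = 1 ->
     (x > / (alpha + 1) -> (T alpha x + 1) * (1 - z) = 1) /\
     (z > / (beta + 1) -> (1 - x) * (T beta z + 1) = 1) /\
     (x <= / (alpha + 1) -> z <= / (beta + 1) ->
        (T alpha x + 1) * (T beta z + 1) = 1)).
Proof.
  destruct gold_facts as [[g1 g2] g3].
  assert (aa : alpha + alpha * alpha >= 1) by nra.
  split; [|split; [|split]].
  - intros H. destruct (Req_dec x 0) as [x0|x0].
    + assert (z = 0) by (subst x; destruct H as [|[|]]; nra).
      subst. rewrite !T_0. left; ring.
    + assert (z0 : z <> 0) by (intro; subst z; destruct H as [|[|]]; nra).
      destruct H as [H|[H|H]].
      * subst z. apply (diff01 _ _ _ _ 0%Z); auto. simpl; lra. lra.
      * apply (diff01 _ _ _ _ 1%Z); auto; [|lra].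
        assert (x - z - x*z = 0) by nra.
        assert (/x + 1 - /z = (z + x*z - x) / (x*z)) by (field; auto).
        change (IZR 1) with 1.
        assert (z + x*z - x = 0) by lra. rewrite H2 in H1. unfold Rdiv in H1. lra.
      * apply (diff01 _ _ _ _ (-1)%Z); auto; [|lra].
        assert (z - x - x*z = 0) by nra.
        assert (/x - 1 - /z = (z - x*z - x) / (x*z)) by (field; auto).
        assert (z - x*z - x = 0) by lra. rewrite H2 in H1. unfold Rdiv in H1.
        replace (IZR (-1)) with (-1) by (simpl; ring). lra.
  - intros H. destruct (Req_dec x 0) as [x0|x0].
    + assert (z = 0) by (subst x; destruct H as [|]; nra).
      subst. rewrite !T_0. left; ring.
    + assert (z0 : z <> 0) by (intro; subst z; destruct H as [|]; nra).
      destruct H as [H|H].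
      * apply (sum01 _ _ _ _ 0%Z); auto; [|lra|lra].
        replace z with (-x) by lra. simpl. rewrite Rinv_opp. ring.
      * apply (sum01 _ _ _ _ (-1)%Z); auto; [|lra|lra].
        assert (x + z + x*z = 0) by nra.
        assert (/z + /x + 1 = (x + z + x*z) / (x*z)) by (field; auto).
        rewrite H0 in H1. unfold Rdiv in H1.
        replace (IZR (-1)) with (-1) by (simpl; ring). lra.
  - intros H. assert (zp : 0 < z) by lra. assert (ab : alpha < beta) by lra.
    assert (zb : z * (1 + beta) > 1) by nra.
    set (w := / z). assert (zw : z * w = 1) by (unfold w; field; lra).
    rewrite (T_n beta z 1) by (try lra; change (IZR 1) with 1; fold w; split; nra).
    fold w. change (IZR 1) with 1. replace (x + 1) with z by lra. nra.
  - intros H. assert (xp : 0 < x) by lra. assert (zp : 0 < z) by lra.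
    set (u := / x). assert (xu : x * u = 1) by (unfold u; field; lra).
    set (w := / z). assert (zw : z * w = 1) by (unfold w; field; lra).
    split; [|split].
    + intros H1. apply lt_inv in H1; [|lra].
      rewrite (T_n alpha x 1) by (try lra; change (IZR 1) with 1; fold u; split; nra).
      fold u. change (IZR 1) with 1. replace (1 - z) with x by lra. nra.
    + intros H1. apply lt_inv in H1; [|lra].
      rewrite (T_n beta z 1) by (try lra; change (IZR 1) with 1; fold w; split; nra).
      fold w. change (IZR 1) with 1. replace (1 - x) with z by lra. nra.
    + intros H1 H2. apply le_inv in H1; [|lra]. apply le_inv in H2; [|lra].
      assert (X : x * (2 + alpha) > 1).
      { destruct (Rlt_or_le 1 (beta + alpha * beta)).
        - assert ((x * (beta+1) - beta) * (2 + alpha) >= 0) by nra. nra.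
        - assert (beta <= alpha) by nra.
          assert ((x - (1 - beta)) * (2 + alpha) > 0) by nra. nra. }
      assert (Z : z * (2 + beta) > 1).
      { destruct (Rlt_or_le 1 (alpha + alpha * beta)).
        - assert ((z * (alpha+1) - alpha) * (2 + beta) >= 0) by nra. nra.
        - assert (beta <= alpha) by nra.
          assert ((z - (1 - alpha)) * (2 + beta) > 0) by nra. nra. }
      assert (E2 : IZR 2 = 2) by (simpl; ring).
      rewrite (T_n alpha x 2) by (try lra; fold u; split; nra).
      rewrite (T_n beta z 2) by (try lra; fold w; split; nra).
      fold u w.
      assert (U : u - 2 + 1 = u * z) by (assert (u*(x+z) = u) by (rewrite H; ring); nra).
      assert (W : w - 2 + 1 = w * x) by (assert (w*(x+z) = w) by (rewrite H; ring); nra).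
      rewrite U, W. replace (u * z * (w * x)) with ((x*u)*(z*w)) by ring.
      rewrite xu, zw. ring.
Qed.
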